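(* Let $(u,v),(u',v')\in\mathcal A$ and let $t,j,k\in\mathbb Z$ with $1\le t<k$, $u'\le u$ and $j\le -u$. Then (i) $d(k;u+j,v,u'+j,v')=d(k;u,v,u',v')$; (ii) $d(k;0,1,u',v')=d(k;0,v',u'-v'+1,1)$; (iii) $d(k;u,v,u',v')=d(k-t;u,v+t,u',v')$; (iv) if moreover $u'<0$, then $d(k;0,1,u',1)=\binom{-2u'-k}{-u'-k+1}\dfrac{k-1}{-u'}$.
   Context: Binomial coefficients $\binom{a}{b}$ with $a\ge0$ are $0$ when $b<0$ or $b>a$. Let $\mathcal A=\{(\ell,r)\in\mathbb Z^2:\ell\le 0,\ r\ge 1\}$. For $(u,v),(u',v')\in\mathcal A$ and $k\in\mathbb Z$, $\mathcal D(k;u,v,u',v')$ is the set of lattice paths from $(u,v)$ to $(u',v')$, all of whose points lie in $\mathcal A$, using only steps $\mathsf U=(0,1)$ and $\mathsf D=(-1,-1)$, which contain exactly $k$ lattice points (counting start and end) on the line $\{(\ell,1):\ell\le 0\}$; and $d(k;u,v,u',v')=|\mathcal D(k;u,v,u',v')|$. *)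

(* Defs.v *)
From mathcomp Require Import all_boot all_order all_algebra.
Set Implicit Arguments. Unset Strict Implicit. Unset Printing Implicit Defensive.
Import Order.TTheory GRing.Theory Num.Theory.
Local Open Scope ring_scope.

Definition pt := (int * int)%type.

Definition inA (p : pt) : bool := (p.1 <= 0) && (1 <= p.2).

Definition onLine (p : pt) : bool := (p.2 == 1) && (p.1 <= 0).

(* a step: true = U = (0,1), false = D = (-1,-1) *)
Definition step (p : pt) (b : bool) : pt :=
  if b then (p.1, p.2 + 1) else (p.1 - 1, p.2 - 1).

Fixpoint pts (p : pt) (s : seq bool) : seq pt :=
  p :: match s with [::] => [::] | b :: s' => pts (step p b) s' end.

(* number of steps of any U/D path from (u,v) to (u',v'):
   #D = u - u', #U = v' - v + (u - u'). (If one of these is negative there is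
   no such path; the endpoint check below then makes the count 0.) *)
Definition plen (u v u' v' : int) : nat := addn (absz (u - u')) (absz (v' - v + (u - u'))).

Definition dcount (k u v u' v' : int) : nat :=
  #|[set s : (plen u v u' v').-tuple bool |
      [&& all inA (pts (u, v) s),
          last (u, v) (pts (u, v) s) == (u', v')
        & (count onLine (pts (u, v) s))%:Z == k]]|.

(* binomial coefficient with integer arguments, 0 when b < 0 or b > a
   (and 0 when a < 0; the paper only uses a >= 0 or b < 0). *)
Definition binomZ (a b : int) : nat :=
  if (0 <= a) && (0 <= b) then 'C(absz a, absz b) else 0%N.

(* Main.v *)
Require Import Defs.
From mathcomp Require Import all_boot all_order all_algebra zify.
Import Order.TTheory GRing.Theory Num.Theory.
Set Implicit Arguments. Unset Strict Implicit. Unset Printing Implicit Defensive.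


Definition T (N : nat) (P : seq bool -> bool) : nat :=
  #|[set s : N.-tuple bool | P (tval s)]|.

Lemma T0 P : T 0 P = P [::].
Proof.
rewrite /T; case: (boolP (P [::])) => HP.
  have -> : [set s : 0.-tuple bool | P s] = setT.
    by apply/setP => x; rewrite !inE tuple0.
  by rewrite cardsT card_tuple.
apply: eq_card0 => x; rewrite !inE tuple0; exact: negbTE HP.
Qed.

Lemma Tsplit N P : T N.+1 P = T N (fun s => P (true :: s)) + T N (fun s => P (false :: s)).
Proof.
rewrite /T -(cardsID [set s : N.+1.-tuple bool | thead s]).
have Hi : forall b : bool, injective (fun s : N.-tuple bool => cons_tuple b s).
  by move=> b x y /(congr1 val) [] /val_inj.
congr addn.
  rewrite -(card_imset _ (Hi true)); apply: eq_card => x.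
  case/tupleP: x => b x; rewrite !inE /=.
  apply/idP/imsetP.
    move=> /andP[H Hb]; case: b H Hb => // H _; exists x; [by rewrite inE | exact: val_inj].
  by case=> y; rewrite inE => Hy /(congr1 val) /= [-> /val_inj ->]; rewrite Hy.
rewrite -(card_imset _ (Hi false)); apply: eq_card => x.
case/tupleP: x => b x; rewrite !inE /=.
apply/idP/imsetP.
  move=> /andP[Hb H]; case: b H Hb => // H _; exists x; [by rewrite inE | exact: val_inj].
by case=> y; rewrite inE => Hy /(congr1 val) /= [-> /val_inj ->]; rewrite Hy andbT.
Qed.


Fixpoint W (N h h' k : nat) : nat :=
  match N with
  | 0 => ((h == h') && (k == (h == 0)))
  | N'.+1 => if h == 0 then (if k is k'.+1 then W N' 1 h' k' else 0)
             else W N' h.+1 h' k + W N' h.-1 h' k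
  end.

Lemma Wfirst N h h' k : W N.+1 h h' k =
  if h == 0 then (if k is k'.+1 then W N 1 h' k' else 0)
  else W N h.+1 h' k + W N h.-1 h' k.
Proof. by []. Qed.

Lemma W0 h h' k : W 0 h h' k = ((h == h') && (k == (h == 0))).
Proof. by []. Qed.

Lemma W0_big h h' k : 2 <= k -> W 0 h h' k = 0.
Proof. by rewrite W0; case: k => [|[|k]] //; case: (h == h'); case: (h == 0). Qed.

Lemma W_iii1 N h h' k : 2 <= k -> W N.+1 h h' k = W N h.+1 h' k.-1.
Proof.
move=> Hk; elim: N h => [|N IH] h.
  rewrite Wfirst; case: eqP => [->|Hh].
    by case: k Hk => [|k].
  rewrite !W0; case: k Hk => [|[|k]] // _.
  by case: (h.-1 == 0); rewrite /= !andbF.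
rewrite Wfirst; case: eqP => [->|Hh].
  by case: k Hk IH => [|k].
rewrite !IH Wfirst /=; case: h Hh => [|h] //= _.
Qed.

Lemma W_iiit t N h h' k : t < k ->
  W N h h' k = if t <= N then W (N - t) (h + t) h' (k - t) else 0.
Proof.
elim: t => [|t IH] Ht.
  by rewrite leq0n !subn0 !addn0.
rewrite IH; last by apply: ltnW.
case: (leqP t.+1 N) => HN.
  rewrite ltnW //.
  have -> : N - t = (N - t.+1).+1 by lia.
  rewrite W_iii1; last by lia.
  by rewrite addnS [k - t.+1]subnS.
case: (leqP t N) => HN' //.
have -> : N = t by lia.
by rewrite subnn W0_big //; lia.
Qed.

Lemma W_desc N h h' k : W N h h' k != 0 -> h <= h' + N.
Proof.
elim: N h k => [|N IH] h k.
  by rewrite W0 addn0; case: (eqVneq h h') => [->|]//.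
rewrite Wfirst; case: (eqVneq h 0) => [->|Hh] //.
case: (boolP (W N h.+1 h' k == 0)) => [/eqP ->|/IH H1] /=.
  move/IH; rewrite addnS => H; lia.
move=> _; lia.
Qed.

Lemma W_end0 N h : W N h 0 0 = 0.
Proof.
elim: N h => [|N IH] h; first by rewrite W0; case: eqP => // ->.
by rewrite Wfirst !IH; case: eqP.
Qed.

Lemma W_00_1 M : W M 0 0 1 = (M == 0).
Proof. by case: M => [|M] //; rewrite Wfirst /= W_end0. Qed.

Lemma W_last N h h' k : W N.+1 h h' k =
  if h' == 0 then (if k is k'.+1 then W N h 1 k' else 0)
  else W N h h'.+1 k + W N h h'.-1 k.
Proof.
elim: N h h' k => [|N IH] h h' k.
  rewrite Wfirst !W0.
  case: h => [|[|h]]; case: h' => [|[|h']]; case: k => [|[|k]] //=;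
    rewrite ?eqSS //; try lia.
rewrite (Wfirst N.+1).
case: (eqVneq h 0) => [->|Hh]; case: (eqVneq h' 0) => [->|Hh'].
- by case: k => [|k].
- case: k => [|k].
    by rewrite !(Wfirst N 0).
  by rewrite (IH 1 h' k) (negbTE Hh') !(Wfirst N 0).
- rewrite (IH h.+1 0 k) (IH h.-1 0 k) /=.
  case: k => [|k] //=.
  by rewrite (negbTE Hh).
- rewrite (IH h.+1 h' k) (IH h.-1 h' k) (negbTE Hh') !(Wfirst N h) (negbTE Hh).
  by rewrite addnACA.
Qed.

Lemma W_sym N h h' k : W N h h' k = W N h' h k.
Proof.
elim: N h h' k => [|N IH] h h' k.
  rewrite !W0; case: (eqVneq h h') => [->|H] //.
rewrite Wfirst W_last; case: (h == 0).
  by case: k => [|k] //; rewrite (IH 1 h').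
by rewrite (IH h.+1 h') (IH h.-1 h').
Qed.

Lemma WfirstS N h h' k : W N.+1 h.+1 h' k = W N h.+2 h' k + W N h h' k.
Proof. by []. Qed.

Definition Cm n j := if j is j'.+1 then 'C(n, j') else 0.

Lemma binCm n j : 'C(n.+1, j) = 'C(n, j) + Cm n j.
Proof. by case: j => [|j] //=; rewrite !bin0. Qed.

Lemma F_closed j a : W (a.+1 + 2 * j) a.+1 0 1 + Cm (a + 2 * j) j = 'C(a + 2 * j, j).
Proof.
elim: j a => [|j IHj] a.
  rewrite !muln0 !addn0 bin0; change (Cm a 0) with 0.
  elim: a => [|a IHa] //.
  rewrite WfirstS IHa.
  have -> : W a.+1 a.+3 0 1 = 0.
    by apply/eqP; apply: contraT => /W_desc; rewrite add0n; lia.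
  by [].
elim: a => [|a IHa].
  have E : 1 + 2 * j.+1 = (2 * j).+3 by lia.
  rewrite E WfirstS W_00_1 /= addn0.
  have := IHj 1; have -> : 2 + 2 * j = (2 * j).+2 by lia.
  have -> : 1 + 2 * j = (2 * j).+1 by lia.
  have -> : 0 + 2 * j.+1 = (2 * j).+2 by lia.
  rewrite /Cm /= => H.
  have Hs : 'C((2 * j).+1, j.+1) = 'C((2 * j).+1, j).
    by rewrite -bin_sub; [congr 'C(_, _); lia | lia].
  rewrite binS (binCm (2 * j).+1 j) Hs.
  clear E; move: H; case: j IHj Hs => [|j] _ Hs /= H; lia.
have H1 := IHj a.+2.
have E1 : a.+2 + 2 * j.+1 = (a.+2 + 2 * j).+2 by lia.
have E2 : a.+3 + 2 * j = (a.+2 + 2 * j).+1 by lia.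
have E3 : a.+1 + 2 * j.+1 = (a.+2 + 2 * j).+1 by lia.
have E4 : a + 2 * j.+1 = a.+2 + 2 * j by lia.
rewrite E2 in H1; rewrite E3 E4 in IHa; rewrite E1 E3 WfirstS.
move: H1 IHa; set n := a.+2 + 2 * j => H1 H2.
change (Cm n j.+1) with (binomial n j) in H2; change (Cm n.+1 j.+1) with (binomial n.+1 j).
rewrite binS binCm; lia.
Qed.

Fixpoint good (h : nat) (s : seq bool) (h' k : nat) : bool :=
  match s with
  | [::] => (h == h') && (k == (h == 0))
  | b :: s' => if b then ((h == 0) <= k) && good h.+1 s' h' (k - (h == 0))
               else (h != 0) && good h.-1 s' h' k
  end.


Lemma T_eq_in N P Q : (forall s, size s = N -> P s = Q s) -> T N P = T N Q.
Proof. by move=> H; apply: eq_card => s; rewrite !inE H // size_tuple. Qed.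

Lemma T_false N : T N (fun _ => false) = 0.
Proof. by apply: eq_card0 => s; rewrite !inE. Qed.

Lemma TW N h h' k : T N (fun s => good h s h' k) = W N h h' k.
Proof.
elim: N h k => [|N IH] h k; first by rewrite T0.
rewrite Tsplit Wfirst; case: (eqVneq h 0) => [->|Hh].
  have -> : T N (fun s => good 0 (false :: s) h' k) = 0.
    by rewrite (@T_eq_in _ _ (fun _ => false)) ?T_false.
  rewrite addn0; case: k => [|k].
    by rewrite (@T_eq_in _ _ (fun _ => false)) ?T_false.
  by rewrite -IH; apply: T_eq_in => s _ /=; rewrite subn1.
rewrite -!IH; congr addn; apply: T_eq_in => s _ /=; by rewrite (negbTE Hh) ?subn0.
Qed.

Lemma good_size h s h' k : good h s h' k -> 2 * count negb s + h' = size s + h.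
Proof.
elim: s h k => [|b s IH] h k /=.
  by case/andP => /eqP -> _; rewrite muln0.
case: b => /=.
  by case/andP => _ /IH; rewrite add0n; lia.
case/andP => Hh /IH; case: h Hh => [|h] //= _; lia.
Qed.

Local Open Scope ring_scope.

Lemma last_pts x p s : last x (pts p s) = last p (pts p s).
Proof. by case: s. Qed.

Lemma key s (u u' : int) (h h' kk : nat) : u <= 0 ->
  [&& all inA (pts (u, Posz h.+1) s),
      last (u, Posz h.+1) (pts (u, Posz h.+1) s) == (u', Posz h'.+1)
    & (count onLine (pts (u, Posz h.+1) s))%:Z == kk%:Z]
  = good h s h' kk && (u' == u - (count negb s)%:Z).
Proof.
elim: s u h kk => [|b s IH] u h kk Hu.
  rewrite /= /inA /onLine /= Hu subr0 /=.
  rewrite xpair_eqE !eqz_nat !eqSS andbT addn0 [u' == u]eq_sym [kk == _]eq_sym.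
  by case: (u == u'); case: (h == h'); rewrite ?andbF ?andbT.
rewrite /= last_pts.
have HA : inA (u, Posz h.+1) by rewrite /inA /= Hu.
rewrite HA /=.
case: b.
  have -> : step (u, Posz h.+1) true = (u, Posz h.+2).
    by rewrite /step /= -[1]/(Posz 1) -PoszD addn1.
  rewrite add0n.
  case: (eqVneq h 0%N) => [->|Hh].
    have -> : onLine (u, Posz 1) by rewrite /onLine /= Hu.
    case: kk => [|kk].
      by rewrite /= !andbF.
    have -> : (kk.+1 - true)%N = kk by rewrite subn1.
    rewrite -(IH u 1%N kk Hu).
by rewrite !eqz_nat add1n eqSS.
  have -> : onLine (u, Posz h.+1) = false.
    by rewrite /onLine /= eqz_nat eqSS (negbTE Hh).
  by rewrite add0n subn0 -(IH _ _ _ Hu).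
have -> : step (u, Posz h.+1) false = (u - 1, Posz h).
  rewrite /step /=; congr pair.
  lia.
clear HA; case: h => [|h].
  by clear IH; case: s => [|? ?]; rewrite /= /inA /= andbF.
have Hu' : u - 1 <= 0 by lia.
have -> : onLine (u, Posz h.+2) = false by rewrite /onLine /=.
rewrite add0n (IH _ _ _ Hu') /=.
congr andb; congr eq_op.
rewrite PoszD; lia.

Qed.

Lemma Cm_mul m j : (j <= m)%N -> (Cm m j * (m.+1 - j) = j * 'C(m, j))%N.
Proof.
case: j => [|j] Hj; first by rewrite /= mul0n.
rewrite /= subSS mulnC -mul_bin_left //.
Qed.

Lemma dcount_T (u u' : int) (h h' kk : nat) : u <= 0 ->
  dcount kk u (Posz h.+1) u' (Posz h'.+1) =
  T (plen u (Posz h.+1) u' (Posz h'.+1))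
    (fun s => good h s h' kk && (u' == u - (count negb s)%:Z)).
Proof. by move=> Hu; rewrite /dcount /T; apply: eq_card => s; rewrite !inE key. Qed.

Lemma dcount_gen (u u' : int) (h h' kk : nat) : u <= 0 -> u' <= u ->
  dcount kk u (Posz h.+1) u' (Posz h'.+1) =
  if 0 <= Posz h'.+1 - Posz h.+1 + (u - u')
  then W (plen u (Posz h.+1) u' (Posz h'.+1)) h h' kk else 0%N.
Proof.
move=> Hu Hu'; rewrite dcount_T //.
have [D HD] : exists D : nat, u - u' = Posz D.
  by exists (absz (u - u')); rewrite gez0_abs // subr_ge0.
case: ifP => Hc.
  have [U HU] : exists U : nat, Posz h'.+1 - Posz h.+1 + (u - u') = Posz U.
    by exists (absz (Posz h'.+1 - Posz h.+1 + (u - u'))); rewrite gez0_abs.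
  have -> : plen u (Posz h.+1) u' (Posz h'.+1) = (D + U)%N.
    by rewrite /plen HU HD.
  rewrite -TW; apply: T_eq_in => s Hs.
  case Hg: (good h s h' kk) => //=.
  have := good_size Hg; rewrite Hs => E.
  apply/eqP; lia.
have [V HV] : exists V : nat, Posz h'.+1 - Posz h.+1 + (u - u') = - Posz V.
  exists (absz (Posz h'.+1 - Posz h.+1 + (u - u'))); rewrite ltz0_abs ?opprK //.
  by rewrite ltNge Hc.
have -> : plen u (Posz h.+1) u' (Posz h'.+1) = (D + V)%N.
  by rewrite /plen HV HD abszN.
rewrite -(T_false (D + V)); apply: T_eq_in => s Hs.
case Hg: (good h s h' kk) => //=.
have := good_size Hg; rewrite Hs => E.
apply/negbTE/eqP => Hc'; lia.
Qed.

Unset Implicit Arguments.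

Theorem lemma5p2 (u v u' v' t j k : int) :
  inA (u, v) -> inA (u', v') ->
  1 <= t -> t < k -> u' <= u -> j <= - u ->
  [/\ dcount k (u + j) v (u' + j) v' = dcount k u v u' v',
      dcount k 0 1 u' v' = dcount k 0 v' (u' - v' + 1) 1,
      dcount k u v u' v' = dcount (k - t) u (v + t) u' v'
    & u' < 0 ->
      ((dcount k 0 1 u' 1)%:R : rat)
        = (binomZ (- 2 * u' - k) (- u' - k + 1))%:R * ((k - 1)%:~R / (- u')%:~R)].
Proof.
rewrite /inA /= => /andP[Hu Hv] /andP[Hu' Hv'] Ht Htk Hu'u Hj.
move: Hv; case: v => [[|h]|n] // _.
move: Hv'; case: v' => [[|h']|n] // _.
case: t Ht Htk => [tt|n] Ht Htk; last by exfalso; lia.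
case: k Htk => [kk|n] Htk; last by exfalso; lia.
have Hkk : (tt < kk)%N by lia.
have Htt : (1 <= tt)%N by lia.
split.
- rewrite !dcount_gen //; try lia.
  have E : u + j - (u' + j) = u - u' by lia.
  by rewrite /plen E.
- rewrite (@dcount_gen 0 u' 0%N h' kk) // //.
  rewrite (@dcount_gen 0 (u' - Posz h'.+1 + 1) h' 0%N kk) //; try lia.
  rewrite !ifT; try lia.
  rewrite W_sym /plen addnC; congr W; congr addn; congr absz; lia.
- have -> : Posz kk - Posz tt = Posz (kk - tt)%N by lia.
  have -> : Posz h.+1 + Posz tt = Posz (h + tt).+1 by lia.
  rewrite !dcount_gen //.
  have [D HD] : exists D : nat, u - u' = Posz D.
    by exists (absz (u - u')); rewrite gez0_abs // subr_ge0.
  rewrite /plen HD.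
  case: ifP => c1; case: ifP => c2.
  + have [U HU] : exists U : nat, Posz h'.+1 - Posz h.+1 + Posz D = Posz U.
      by exists (absz (Posz h'.+1 - Posz h.+1 + Posz D)); rewrite gez0_abs //; lia.
    have E2 : Posz h'.+1 - Posz (h + tt).+1 + Posz D = Posz (U - tt)%N by lia.
    rewrite HU E2 /= (W_iiit _ _ _ Hkk) ifT; last by lia.
    congr W; lia.
  + have [U HU] : exists U : nat, Posz h'.+1 - Posz h.+1 + Posz D = Posz U.
      by exists (absz (Posz h'.+1 - Posz h.+1 + Posz D)); rewrite gez0_abs //; lia.
    rewrite HU /= (W_iiit _ _ _ Hkk); case: ifP => // _.
    apply/eqP; apply: contraT => /W_desc; move/negbT: c2; lia.
  + by exfalso; move/negbT: c1; lia.
  + by [].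
- move=> Hneg; move: Hu' Hu'u Hneg; case: u' => [m|n] _ _ Hneg; first by exfalso; lia.
  rewrite NegzE (@dcount_gen 0 (- Posz n.+1) 0%N 0%N kk) //.
  have -> : (0 <= Posz 1 - Posz 1 + (0 - - Posz n.+1)) = true by lia.
  have E1 : 0 - - Posz n.+1 = Posz n.+1 by lia.
  have E2 : Posz 1 - Posz 1 + Posz n.+1 = Posz n.+1 by lia.
  rewrite /plen E1 [absz _]/= opprK.
  set N := n.+1.
  have Hk1 : (kk.-1 < kk)%N by lia.
  rewrite (W_iiit _ _ _ Hk1).
  case: (leqP kk N.+1) => HkN.
    have EB1 : -2 * - Posz N - Posz kk = Posz (N + N - kk)%N by lia.
    have EB2 : Posz N - Posz kk + 1 = Posz (N.+1 - kk)%N by lia.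
    rewrite /binomZ EB1 EB2 /= ifT; last by lia.
    have EW : (N + N - kk.-1 = (kk - 2).+1 + 2 * (N.+1 - kk))%N by lia.
    have Eh : (0 + kk.-1 = (kk - 2).+1)%N by lia.
    have Ek : (kk - kk.-1 = 1)%N by lia.
    have Em : (N + N - kk = (kk - 2) + 2 * (N.+1 - kk))%N by lia.
    rewrite EW Eh Ek Em.
    have HF := F_closed (N.+1 - kk) (kk - 2).
    have HC := @Cm_mul ((kk - 2) + 2 * (N.+1 - kk)) (N.+1 - kk) ltac:(lia).
    move: HF HC.
    set W0 := W _ _ _ _; set C := 'C(_, _); set Cm0 := Cm _ _ => HF HC.
    have EN : (((kk - 2) + 2 * (N.+1 - kk)).+1 - (N.+1 - kk) = N)%N by lia.
    rewrite EN in HC.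
    have key : (W0 * N = C * (kk - 2).+1)%N by nia.
    have -> : Posz kk - 1 = Posz (kk - 2).+1 by lia.
    rewrite -[(Posz (kk - 2).+1)%:~R]/(((kk - 2).+1)%:R) -[(Posz N)%:~R]/(N%:R).
    rewrite mulrA -natrM -key natrM mulfK // pnatr_eq0.
    by [].
  have EB2 : (0 <= Posz N - Posz kk + 1) = false.
    by apply/negbTE; rewrite -ltNge; lia.
  rewrite /binomZ EB2 andbF mul0r.
  case: ifP => // _.
  apply/eqP; rewrite pnatr_eq0; apply: contraT => /W_desc; lia.
Qed.
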